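(* Each of the exposure metrics $ED$, $ER$, $DTD$, $DTR$, $DID$, $DIR$ satisfies distinguishability of groups: for every population $\mathcal D$ with uniform relevance, $v_{\mathrm{last}}(m,\mathcal D)<v_{\mathrm{opt}}(m)<v_{\mathrm{first}}(m,\mathcal D)$.
   Context: A population is a finite set $\mathcal{D}$ of candidates partitioned into two nonempty groups, a non-protected group $G_0$ and a protected group $G_1$; each candidate $d$ has relevance $y(d)\in\mathbb R$. For a candidate set $D\subseteq\mathcal D$ with $n=|D|$, a ranking is a bijection $r:\{1,\dots,n\}\to D$, $r^{-1}(d)$ denotes the position of $d$. Uniform relevance means $y(d)=1$ for all $d\in\mathcal D$. $\mathcal R_{\mathrm{first}}(D)$ ($\mathcal R_{\mathrm{last}}(D)$) is the set of rankings of $D$ in which every candidate of $G_1\cap D$ is ranked above (below) every candidate of $G_0\cap D$. Under uniform relevance, $v_{\mathrm{first}}(m,D)$ and $v_{\mathrm{last}}(m,D)$ denote the (common) values of $m$ on rankings in $\mathcal R_{\mathrm{first}}(D)$ and $\mathcal R_{\mathrm{last}}(D)$. Position bias $b(k)=1/\log_2(k+1)$. Exposure metrics: for a ranking $r$ of $D$ and $G\in\{G_0,G_1\}$, $\mathrm{Exposure}(G|r)=\frac{1}{|G|}\sum_{d\in G\cap D} b(r^{-1}(d))$, $Y(G)=\frac1{|G|}\sum_{d\in G}y(d)$, $CTR(G|r)=\frac1{|G|}\sum_{d\in G\cap D} b(r^{-1}(d))\,y(d)$ (here $|G|$ is the size of the group in the whole population). Then $ED(r)=\mathrm{Exposure}(G_1|r)-\mathrm{Exposure}(G_0|r)$,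 $ER(r)=\mathrm{Exposure}(G_1|r)/\mathrm{Exposure}(G_0|r)$, $DTD(r)=\frac{\mathrm{Exposure}(G_1|r)}{Y(G_1)}-\frac{\mathrm{Exposure}(G_0|r)}{Y(G_0)}$, $DTR(r)=\frac{\mathrm{Exposure}(G_1|r)}{\mathrm{Exposure}(G_0|r)}\cdot\frac{Y(G_0)}{Y(G_1)}$, $DID(r)=\frac{CTR(G_1|r)}{Y(G_1)}-\frac{CTR(G_0|r)}{Y(G_0)}$, $DIR(r)=\frac{CTR(G_1|r)}{CTR(G_0|r)}\cdot\frac{Y(G_0)}{Y(G_1)}$. Optimal values: $v_{\mathrm{opt}}=0$ for $ED,DTD,DID$ and $v_{\mathrm{opt}}=1$ for $ER,DTR,DIR$. *)

(* Defs.v *)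
From HB Require Import structures.
From mathcomp Require Import all_boot all_order all_algebra.
From mathcomp Require Import all_classical all_reals all_analysis.
Set Implicit Arguments. Unset Strict Implicit. Unset Printing Implicit Defensive.
Import Order.TTheory GRing.Theory Num.Theory.
Local Open Scope ring_scope.

(* Population: a finite type T; [g d = true] iff d is in the protected
   group G1, [g d = false] iff d is in the non-protected group G0.  The candidate set is the whole population.
   A ranking of T is encoded by its inverse: an injective (hence bijective)
   map [pos : T -> 'I_#|T|]; the (1-based) position r^{-1}(d) is [pos d + 1]. *)

Section Fairness.
Variables (R : realType) (T : finType).

Definition log2 (x : R) : R := ln x / ln 2.

Definition bias (k : nat) : R := 1 / log2 (k%:R + 1).

Definition is_ranking (pos : T -> 'I_#|T|) : Prop := injective pos.

Definition position (pos : T -> 'I_#|T|) (d : T) : nat := (nat_of_ord (pos d)).+1.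

Definition group_size (g : T -> bool) (i : bool) : R :=
  (#|[pred d | g d == i]|)%:R.

Definition Exposure (g : T -> bool) (i : bool) (pos : T -> 'I_#|T|) : R :=
  (group_size g i)^-1 * \sum_(d | g d == i) bias (position pos d).

Definition Yavg (g : T -> bool) (y : T -> R) (i : bool) : R :=
  (group_size g i)^-1 * \sum_(d | g d == i) y d.

Definition CTR (g : T -> bool) (y : T -> R) (i : bool) (pos : T -> 'I_#|T|) : R :=
  (group_size g i)^-1 * \sum_(d | g d == i) bias (position pos d) * y d.

Definition ED g (y : T -> R) pos := Exposure g true pos - Exposure g false pos.
Definition ER g (y : T -> R) pos := Exposure g true pos / Exposure g false pos.
Definition DTD g y pos :=
  Exposure g true pos / Yavg g y true - Exposure g false pos / Yavg g y false.
Definition DTR g y pos :=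
  (Exposure g true pos / Exposure g false pos) * (Yavg g y false / Yavg g y true).
Definition DID g y pos :=
  CTR g y true pos / Yavg g y true - CTR g y false pos / Yavg g y false.
Definition DIR g y pos :=
  (CTR g y true pos / CTR g y false pos) * (Yavg g y false / Yavg g y true).

Definition ranked_first (g : T -> bool) (pos : T -> 'I_#|T|) : Prop :=
  forall d1 d0, g d1 = true -> g d0 = false -> (position pos d1 < position pos d0)%N.
Definition ranked_last (g : T -> bool) (pos : T -> 'I_#|T|) : Prop :=
  forall d1 d0, g d1 = true -> g d0 = false -> (position pos d0 < position pos d1)%N.

End Fairness.

Inductive metric := mED | mER | mDTD | mDTR | mDID | mDIR.

Definition eval_metric (R : realType) (T : finType) (m : metric) :
  (T -> bool) -> (T -> R) -> (T -> 'I_#|T|) -> R :=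
  match m with
  | mED => @ED R T | mER => @ER R T | mDTD => @DTD R T
  | mDTR => @DTR R T | mDID => @DID R T | mDIR => @DIR R T
  end.

Definition v_opt (R : realType) (m : metric) : R :=
  match m with mED | mDTD | mDID => 0 | mER | mDTR | mDIR => 1 end.

(* Main.v *)
Require Import Defs.
From mathcomp Require Import all_boot all_order all_algebra.
From mathcomp Require Import all_classical all_reals all_analysis.
Import Order.TTheory GRing.Theory Num.Theory.
Local Open Scope ring_scope.

Set Implicit Arguments.
Section H.
Variables (R : realType) (T : finType).

Lemma biasE (k : nat) : bias R k = ln 2 / ln (k%:R + 1).
Proof. by rewrite /bias /log2 mul1r invf_div. Qed.

Lemma lnk_gt0 (k : nat) : (0 < k)%N -> 0 < ln (k%:R + 1 : R).
Proof.
move=> hk; apply: ln_gt0; rewrite ltrDr ltr0n //.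
Qed.

Lemma bias_gt0 k : (0 < k)%N -> 0 < bias R k.
Proof.
move=> hk; rewrite biasE divr_gt0 //; last exact: lnk_gt0.
by apply: ln_gt0; rewrite ltr1n.
Qed.

Lemma bias_lt k k' : (0 < k)%N -> (k < k')%N -> bias R k' < bias R k.
Proof.
move=> hk hkk; rewrite !biasE ltr_pM2l; last by apply: ln_gt0; rewrite ltr1n.
have h1 : 0 < ln (k%:R + 1 : R) by apply: lnk_gt0.
have h2 : (0 < k')%N by apply: leq_ltn_trans hkk.
have h2' : 0 < ln (k'%:R + 1 : R) by apply: lnk_gt0.
rewrite ltf_pV2 ?posrE //.
rewrite ltr_ln ?posrE ?ltrD2r ?ltr_nat // addr_gt0 // ltr0n //=; exact: (leq_ltn_trans _ hkk).
Qed.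

Lemma bias_le k k' : (0 < k)%N -> (k <= k')%N -> bias R k' <= bias R k.
Proof.
move=> hk; rewrite leq_eqVlt => /orP [/eqP -> //|h].
exact/ltW/bias_lt.
Qed.

Lemma avg_gt (P : T -> bool) (f : T -> R) c : (exists d, P d) ->
  (forall d, P d -> c < f d) -> c < (#|[pred d | P d]|%:R)^-1 * \sum_(d | P d) f d.
Proof.
move=> [d0 Pd0] H.
have hn : (0 < #|[pred d | P d]|)%N by apply/card_gt0P; exists d0.
have hn' : (0 : R) < #|[pred d | P d]|%:R by rewrite ltr0n.
rewrite ltr_pdivlMl //.
have -> : #|[pred d | P d]|%:R * c = \sum_(d | P d) c by rewrite sumr_const mulr_natl.
apply: ltr_sum => //.
by apply/hasP; exists d0 => //; rewrite mem_index_enum.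
Qed.

Lemma avg_le (P : T -> bool) (f : T -> R) c : (exists d, P d) ->
  (forall d, P d -> f d <= c) -> (#|[pred d | P d]|%:R)^-1 * \sum_(d | P d) f d <= c.
Proof.
move=> [d0 Pd0] H.
have hn : (0 < #|[pred d | P d]|)%N by apply/card_gt0P; exists d0.
have hn' : (0 : R) < #|[pred d | P d]|%:R by rewrite ltr0n.
rewrite ler_pdivrMl //.
have -> : #|[pred d | P d]|%:R * c = \sum_(d | P d) c by rewrite sumr_const mulr_natl.
exact: ler_sum.
Qed.

Lemma sep (g : T -> bool) (i : bool) (pos : T -> 'I_#|T|) :
  (exists d, g d = i) -> (exists d, g d = ~~ i) ->
  (forall a b, g a = i -> g b = ~~ i -> (position pos a < position pos b)%N) ->
  Exposure R g (~~ i) pos < Exposure R g i pos.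
Proof.
move=> [a0 ha0] [b0 hb0] H.
have Pb0 : g b0 == ~~ i by rewrite hb0.
case: (@arg_minnP T b0 (fun d => g d == ~~ i) (position pos) Pb0) => bm /eqP hbm hmin.
apply: (@le_lt_trans _ _ (bias R (position pos bm))).
  rewrite /Exposure /group_size.
  apply: (@avg_le (fun d => g d == ~~ i)); first by exists b0.
  by move=> d hd; apply: bias_le => //; exact: hmin.
rewrite /Exposure /group_size.
apply: (@avg_gt (fun d => g d == i)); first by exists a0; rewrite /= ha0.
by move=> d /eqP hd; apply: bias_lt => //; apply: H.
Qed.

Lemma expo_gt0 (g : T -> bool) (i : bool) (pos : T -> 'I_#|T|) :
  (exists d, g d = i) -> 0 < Exposure R g i pos.
Proof.
move=> [a0 ha0]; rewrite /Exposure /group_size.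
apply: (@avg_gt (fun d => g d == i)); first by exists a0; rewrite /= ha0.
by move=> d _; apply: bias_gt0.
Qed.

Lemma Yavg1 (g : T -> bool) (y : T -> R) i : (forall d, y d = 1) ->
  (exists d, g d = i) -> Yavg g y i = 1.
Proof.
move=> hy [a0 ha0]; rewrite /Yavg /group_size.
under eq_bigr do rewrite hy.
rewrite sumr_const mulVf //.
rewrite pnatr_eq0 -lt0n; apply/card_gt0P; exists a0; rewrite inE /= ha0 eqxx //.
Qed.

Lemma CTR_E (g : T -> bool) (y : T -> R) i pos : (forall d, y d = 1) ->
  CTR g y i pos = Exposure R g i pos.
Proof.
by move=> hy; rewrite /CTR /Exposure; under eq_bigr do rewrite hy mulr1.
Qed.

End H.

Theorem theorem2 (R : realType) (T : finType) (g : T -> bool) (y : T -> R)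
  (m : metric) :
  (exists d, g d = false) -> (exists d, g d = true) ->
  (forall d, y d = 1) ->
  (forall pos : T -> 'I_#|T|, is_ranking pos -> ranked_last g pos ->
     eval_metric m g y pos < v_opt R m) /\
  (forall pos : T -> 'I_#|T|, is_ranking pos -> ranked_first g pos ->
     v_opt R m < eval_metric m g y pos).
Proof.
move=> h0 h1 hy.
have Y0 : Yavg g y false = 1 by apply: Yavg1.
have Y1 : Yavg g y true = 1 by apply: Yavg1.
have C1 : forall pos, CTR g y true pos = Exposure R g true pos by move=> pos; apply: CTR_E.
have C0 : forall pos, CTR g y false pos = Exposure R g false pos by move=> pos; apply: CTR_E.
split=> pos _ hr.
- have hl : Exposure R g true pos < Exposure R g false pos.
    by apply: (@sep R T g false pos h0 h1) => a b ha hb; apply: hr.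
  have p0 : 0 < Exposure R g false pos by apply: expo_gt0.
  case: m => /=.
  + by rewrite /ED subr_lt0.
  + by rewrite /ER ltr_pdivrMr // mul1r.
  + by rewrite /DTD Y0 Y1 !divr1 subr_lt0.
  + by rewrite /DTR Y0 Y1 divr1 mulr1 ltr_pdivrMr // mul1r.
  + by rewrite /DID C0 C1 Y0 Y1 !divr1 subr_lt0.
  + by rewrite /DIR C0 C1 Y0 Y1 divr1 mulr1 ltr_pdivrMr // mul1r.
- have hl : Exposure R g false pos < Exposure R g true pos.
    by apply: (@sep R T g true pos h1 h0) => a b ha hb; apply: hr.
  have p0 : 0 < Exposure R g false pos by apply: expo_gt0.
  case: m => /=.
  + by rewrite /ED subr_gt0.
  + by rewrite /ER ltr_pdivlMr // mul1r.
  + by rewrite /DTD Y0 Y1 !divr1 subr_gt0.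
  + by rewrite /DTR Y0 Y1 divr1 mulr1 ltr_pdivlMr // mul1r.
  + by rewrite /DID C0 C1 Y0 Y1 !divr1 subr_gt0.
  + by rewrite /DIR C0 C1 Y0 Y1 divr1 mulr1 ltr_pdivlMr // mul1r.
Qed.
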